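(* Let $(x,y)$ be a $\delta$-feasible assignment, let $\mathcal{F}$ be an acyclic $y$-flow from $S$ to $T$ (with respect to $(x,y)$), and let $(x',y')$ be the result of chain shifting $(x,y)$ according to $\mathcal{F}$. Let $d$ be the largest value of $\mathrm{dist}_G(u,w)$ over arcs $(u,w)$ of $G_{\mathcal{F}}$. Then $(x',y')$ is $(\delta+d)$-feasible; every vertex $v$ of indegree zero in $G_{\mathcal{F}}$ satisfies $\mathrm{radius}_{(x',y')}(v)\le\mathrm{radius}_{(x,y)}(v)$; every other vertex $v$ satisfies $\mathrm{radius}_{(x',y')}(v)\le\max\big(\mathrm{radius}_{(x,y)}(v),\ \max_{a\in N^{in}_{G_\mathcal{F}}(v)}(\mathrm{radius}_{(x,y)}(a)+\mathrm{dist}_G(a,v))\big)$; and $y'_v=y_v$ for every $v\in V\setminus(S\cup T)$.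
   Context: $G=(V,E)$ undirected unweighted, $\mathrm{dist}_G$ shortest-path distance, $L:V\to\mathbb{N}$, $k$ a positive integer. An assignment is $x:V\times V\to\mathbb{R}_{\ge0}$, $y:V\to\mathbb{R}_{\ge0}$; it is $\delta$-feasible if (1) $\sum_u y_u=k$; (2) $x_{u,v}\le y_u$; (3) $\sum_v x_{u,v}\le L(u)y_u$; (4) $\sum_u x_{u,v}=1$; (5) $0\le y_u\le1$; (6) $x_{u,v}=0$ whenever $\mathrm{dist}_G(u,v)>\delta$; (7) $x_{u,v}\ge0$. $\mathrm{radius}_{(x,y)}(u)$ is the largest integer $i$ such that some $v$ has $\mathrm{dist}_G(v,u)=i$ and $x_{u,v}>0$ ($0$ if none). $y$-flow: for an assignment $(x,y)$ and disjoint $S,T\subseteq V$, a $y$-flow from $S$ to $T$ is a finite collection $\mathcal{F}$ of paths $(\alpha,v_1,\dots,v_t)$ with $\alpha>0$ real, $v_1\in S$, $v_t\in T$, $L(v_1)\le L(v_t)$, and for $2\le i\le t-1$: $v_i\notin S\cup T$, $y_{v_i}=1$, $L(v_i)\ge L(v_1)$ (such a path transfers $\alpha$ from $v_1$ to $v_t$ through $v_2,\dots,v_{t-1}$), such that: for each $v\in S$ the total amount transferred from $v$ is at most $y_v$; for each $v\in T$ the total transferred to $v$ is at most $1-y_v$; for each $v\notin S\cup T$ the total transferred through $v$ is at most $1$. $G_{\mathcal{F}}=(V,A)$ is the directed graph with arc $(u,w)$ iff some path of $\mathcal{F}$ contains $u,w$ as consecutive vertices in this order; $\mathcal{F}$ is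 acyclic iff $G_{\mathcal{F}}$ is acyclic. $f_{\mathcal{F}}(u,w)$ is the sum of $\alpha$ over paths containing $u,w$ consecutively; $fl_{\mathcal{F}}(u,w)$ is the sum of $L(v_1)\alpha$ over such paths $(\alpha,v_1,\dots)$. $N^{in}_{G_\mathcal{F}}(v)=\{u:(u,v)\in A\}$. Chain shifting of $(x,y)$ according to acyclic $\mathcal{F}$: set $\Delta_{u,v}=0$ for all $u,v$; for each arc $(u,a)\in A$ in reverse topological order of $G_\mathcal{F}$ and each $v\in V$, let $\Delta=x_{u,v}\,fl_\mathcal{F}(u,a)/(L(u)y_u)$ and set $\Delta_{a,v}\mathrel{+}=\Delta$, $\Delta_{u,v}\mathrel{-}=\Delta$; then set $x_{u,v}\mathrel{+}=\Delta_{u,v}$ for all $u,v$; for each $s\in S$ decrease $y_s$ by $\sum_{(s,u)\in A}f_\mathcal{F}(s,u)$; for each $t\in T$ increase $y_t$ by $\sum_{(u,t)\in A}f_\mathcal{F}(u,t)$. *)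

(* Defs.v *)
From HB Require Import structures.
From mathcomp Require Import all_boot all_order all_algebra.
From Stdlib Require Import ClassicalEpsilon.
Set Implicit Arguments. Unset Strict Implicit. Unset Printing Implicit Defensive.
Import Order.TTheory GRing.Theory Num.Theory.

Fixpoint walk (V : finType) (e : rel V) (n : nat) (u v : V) : bool :=
  match n with
  | 0 => u == v
  | n'.+1 => [exists w, e u w && walk e n' w v]
  end.

(* shortest-path distance; None encodes +infinity (v unreachable from u) *)
Definition dist (V : finType) (e : rel V) (u v : V) : option nat :=
  match excluded_middle_informative (exists n, walk e n u v) with
  | left H => Some (@ex_minn (fun n => walk e n u v) H)
  | right _ => None
  end.

Definition ext_gt (a b : option nat) : bool :=   (* a > b, None = oo *)
  match b with
  | None => false
  | Some b' => match a with None => true | Some a' => (b' < a')%N end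
  end.
Definition ole (n : nat) (b : option nat) : bool :=
  if b is Some m then (n <= m)%N else true.
Definition eadd (d : nat) (b : option nat) : option nat := omap (addn d) b.

Local Open Scope ring_scope.

Definition feasible (V : finType) (e : rel V) (R : realFieldType)
  (L : V -> nat) (k : nat) (delta : option nat)
  (x : V -> V -> R) (y : V -> R) : Prop :=
  [/\ \sum_(u : V) y u = k%:R,
      forall u v, x u v <= y u,
      forall u, \sum_(v : V) x u v <= (L u)%:R * y u,
      forall v, \sum_(u : V) x u v = 1 &
      [/\ forall u, 0 <= y u <= 1,
          forall u v, ext_gt (dist e u v) delta -> x u v = 0 &
          forall u v, 0 <= x u v]].

Definition radius (V : finType) (e : rel V) (R : realFieldType)
  (x : V -> V -> R) (u : V) : nat :=
  (\max_(v | (0 < x u v)%R && (dist e v u != None)) odflt 0%N (dist e v u))%N.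

(* ---------- y-flows.  A path (alpha, v_1, ..., v_t) is (alpha, (v_1, [v_2;...;v_t])) *)
Definition flowpath (V : finType) (R : realFieldType) := (R * (V * seq V))%type.

Section Flow.
Variables (V : finType) (R : realFieldType).
Implicit Types (p : flowpath V R) (F : seq (flowpath V R)).

Definition pfirst p : V := p.2.1.
Definition plast p : V := last p.2.1 p.2.2.
Definition pverts p : seq V := p.2.1 :: p.2.2.
(* v_2, ..., v_{t-1} *)
Definition pinterior p : seq V := behead (belast p.2.1 p.2.2).
Definition ppairs p : seq (V * V) := zip (pverts p) (behead (pverts p)).

Definition is_yflow (L : V -> nat) (y : V -> R) (S T : {set V}) F : Prop :=
  [/\ forall p, p \in F ->
        [/\ 0 < p.1, pfirst p \in S, plast p \in T,
            (L (pfirst p) <= L (plast p))%N &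
            forall v, v \in pinterior p ->
              [/\ v \notin S, v \notin T, y v = 1 & (L (pfirst p) <= L v)%N]],
      forall v, v \in S -> \sum_(p <- F | pfirst p == v) p.1 <= y v,
      forall v, v \in T -> \sum_(p <- F | plast p == v) p.1 <= 1 - y v &
      forall v, v \notin S -> v \notin T ->
        \sum_(p <- F) p.1 * (count_mem v (pinterior p))%:R <= 1].

Definition farc F : rel V := fun u w => has (fun p => (u, w) \in ppairs p) F.

Definition facyclic F : Prop := forall u w, farc F u w -> ~~ connect (farc F) w u.

Definition fflow F (u w : V) : R := \sum_(p <- F | (u, w) \in ppairs p) p.1.
Definition flflow (L : V -> nat) F (u w : V) : R :=
  \sum_(p <- F | (u, w) \in ppairs p) (L (pfirst p))%:R * p.1.

(* Delta is computed from the ORIGINAL x (x is only updated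
   at the end), so the accumulated Delta_{w,v} is the sum of the increments
   over arcs (u,w) minus the decrements over arcs (w,a). *)
Definition cs_x (L : V -> nat) (x : V -> V -> R) (y : V -> R) F (w v : V) : R :=
  x w v
  + \sum_(u : V | farc F u w) x u v * flflow L F u w / ((L u)%:R * y u)
  - \sum_(a : V | farc F w a) x w v * flflow L F w a / ((L w)%:R * y w).

Definition cs_y (y : V -> R) (S T : {set V}) F (t : V) : R :=
  if t \in S then y t - \sum_(u : V | farc F t u) fflow F t u
  else if t \in T then y t + \sum_(u : V | farc F u t) fflow F u t
  else y t.
End Flow.

(* d = largest dist_G(u,w) over arcs (u,w) of G_F (None = oo; 0 if no arcs) *)
Definition dmax (V : finType) (e : rel V) (R : realFieldType) (F : seq (flowpath V R))
  : option nat :=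
  if [forall u, forall w, farc F u w ==> (dist e u w != None)]
  then Some (\max_(uw : V * V | farc F uw.1 uw.2) odflt 0%N (dist e uw.1 uw.2))%N
  else None.

Definition rbound (V : finType) (e : rel V) (R : realFieldType)
  (x : V -> V -> R) (F : seq (flowpath V R)) (v : V) : option nat :=
  if [forall a, farc F a v ==> (dist e a v != None)]
  then Some (maxn (radius e x v)
                  (\max_(a | farc F a v) (radius e x a + odflt 0%N (dist e a v))))%N
  else None.

(* Main.v *)
Require Import Defs.
From HB Require Import structures.
From mathcomp Require Import all_boot all_order all_algebra.
From Stdlib Require Import ClassicalEpsilon.
From mathcomp Require Import ring lra zify.
Import Order.TTheory GRing.Theory Num.Theory.
Set Implicit Arguments. Unset Strict Implicit. Unset Printing Implicit Defensive.

Section Lists.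
Variable V : eqType.
Implicit Types (x lst u w a : V) (int : seq V).

Definition Z x int lst := zip (x :: int) (rcons int lst).

Lemma memZ1 x int lst u w : (u, w) \in Z x int lst -> u \in x :: int.
Proof.
elim: int x => [|i int IH] x; rewrite /Z /= => H.
  by move: H; rewrite !mem_seq1 => /eqP[->].
move: H; rewrite in_cons => /orP[/eqP[-> _]|]; first by rewrite eqxx.
by move/IH => ->; rewrite orbT.
Qed.

Lemma memZ2 x int lst u w : (u, w) \in Z x int lst -> w \in rcons int lst.
Proof.
elim: int x => [|i int IH] x; rewrite /Z /= => H.
  by move: H; rewrite !mem_seq1 => /eqP[_ ->].
move: H; rewrite in_cons => /orP[/eqP[_ ->]|]; first by rewrite eqxx.
by move/IH => ->; rewrite orbT.
Qed.

Lemma Zfirst x int lst a : x \notin int -> ((x, a) \in Z x int lst) = (a == head lst int).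
Proof.
case: int => [|i int] /=; first by rewrite /Z /= mem_seq1 xpair_eqE eqxx.
rewrite in_cons negb_or => /andP[xi xint].
rewrite /Z /= in_cons xpair_eqE eqxx /=.
case: (boolP ((x, a) \in _)) => [/memZ1|]; last by rewrite orbF.
rewrite in_cons (negbTE xint) orbF => /eqP E; by move: xi; rewrite E eqxx.
Qed.

Lemma Zlast x int lst u : lst \notin int -> ((u, lst) \in Z x int lst) = (u == last x int).
Proof.
elim: int x => [|i int IH] x /=; first by rewrite /Z /= mem_seq1 xpair_eqE eqxx andbT.
rewrite in_cons negb_or => /andP[li lint].
rewrite /Z /= in_cons xpair_eqE (negbTE li) andbF /=.
exact: IH.
Qed.

Lemma Zsucc x int lst w : w \in x :: int -> exists a, (w, a) \in Z x int lst.
Proof.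
elim: int x => [|i int IH] x /=.
  by rewrite mem_seq1 => /eqP->; exists lst; rewrite /Z /= mem_seq1.
rewrite in_cons => /orP[/eqP->|/IH [a Ha]]; first by exists i; rewrite /Z /= mem_head.
by exists a; rewrite /Z /= in_cons Ha orbT.
Qed.

Lemma Zpred_uniq x int lst u u' w : uniq (x :: rcons int lst) ->
  (u, w) \in Z x int lst -> (u', w) \in Z x int lst -> u = u'.
Proof.
elim: int x => [|i int IH] x /=.
  by rewrite /Z /= !mem_seq1 => _ /eqP[-> _] /eqP[-> _].
move=> /andP[_ U].
rewrite /Z /= !in_cons => /orP[/eqP E1|H1] /orP[/eqP E2|H2].
- by case: E1 => -> _; case: E2 => ->.
- case: E1 => _ Ew; move: U => /= /andP[/negP Hn _]; case: Hn.
  by rewrite -Ew; exact: (memZ2 H2).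
- case: E2 => _ Ew; move: U => /= /andP[/negP Hn _]; case: Hn.
  by rewrite -Ew; exact: (memZ2 H1).
- exact: (IH i U H1 H2).
Qed.

Lemma Zcount1 x int lst w : count (fun q => q.1 == w) (Z x int lst) = count_mem w (x :: int).
Proof.
elim: int x => [|i int IH] x; first by rewrite /Z /= eq_sym.
by rewrite /Z /= -/(Z i int lst) IH /= eq_sym.
Qed.

End Lists.

Section Dist.
Variables (V : finType) (e : rel V).

Lemma walk_cat n m u w v : walk e n u w -> walk e m w v -> walk e (n + m) u v.
Proof.
elim: n u => [|n IH] u /=; first by move/eqP->.
move=> /existsP [w1 /andP [e1 H1]] H2; apply/existsP; exists w1.
by apply/andP; split => //; exact: (IH _ H1 H2).
Qed.

Lemma walk_snoc n u w v : walk e n u w -> e w v -> walk e n.+1 u v.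
Proof.
elim: n u => [|n IH] u /=.
  by move/eqP-> => ewv; apply/existsP; exists v; rewrite ewv eqxx.
move=> /existsP [w1 /andP [e1 H1]] ewv; apply/existsP; exists w1.
by apply/andP; split => //; exact: (IH _ H1 ewv).
Qed.

Hypothesis esym : symmetric e.

Lemma walk_rev n u v : walk e n u v -> walk e n v u.
Proof.
elim: n u v => [|n IH] u v /=; first by rewrite eq_sym.
move=> /existsP [w1 /andP [e1 H1]].
by apply: walk_snoc (IH _ _ H1) _; rewrite esym.
Qed.

Lemma distP u v n : dist e u v = Some n ->
  walk e n u v /\ forall m, walk e m u v -> (n <= m)%N.
Proof.
rewrite /dist; case: excluded_middle_informative => // H [<-].
by case: ex_minnP.
Qed.

Lemma distN u v : dist e u v = None -> forall m, ~~ walk e m u v.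
Proof.
rewrite /dist; case: excluded_middle_informative => // H _ m.
by apply/negP => Hm; apply: H; exists m.
Qed.

Lemma dist_walk u v m : walk e m u v -> exists n, dist e u v = Some n /\ (n <= m)%N.
Proof.
case E: (dist e u v) => [n|] Hm; last by move: (distN E m); rewrite Hm.
by exists n; split => //; apply: (proj2 (distP E)).
Qed.

Lemma dist_sym u v : dist e u v = dist e v u.
Proof.
case E1: (dist e u v) => [n|]; case E2: (dist e v u) => [n'|] //.
- have [H1 M1] := distP E1; have [H2 M2] := distP E2.
  by have := M1 _ (walk_rev H2); have := M2 _ (walk_rev H1) => a b; congr Some; apply/eqP; rewrite eqn_leq a b.
- by have [H1 _] := distP E1; move: (distN E2 n); rewrite (walk_rev H1).
- by have [H2 _] := distP E2; move: (distN E1 n'); rewrite (walk_rev H2).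
Qed.

Lemma dist_tri u w v a b : dist e u w = Some a -> dist e w v = Some b ->
  exists c, dist e u v = Some c /\ (c <= a + b)%N.
Proof.
move=> /distP [H1 _] /distP [H2 _]; exact: dist_walk (walk_cat H1 H2).
Qed.

End Dist.

Local Open Scope ring_scope.

Lemma ppairsE (V : eqType) (x y : V) r :
  zip (x :: y :: r) (y :: r) = Z x (belast y r) (last y r).
Proof.
rewrite /Z; elim: r x y => [|z r IH] x y //=.
by rewrite -IH.
Qed.

Lemma path_of_pairs (V : eqType) (e : rel V) x r :
  (forall q, q \in zip (x :: r) r -> e q.1 q.2) -> path e x r.
Proof.
elim: r x => [|z r IH] x //= H.
rewrite (H (x, z)) ?mem_head //=.
by apply: IH => q Hq; apply: H; rewrite /= in_cons Hq orbT.
Qed.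

Lemma uniq_acyc (V : finType) (e : rel V) x r :
  path e x r -> (forall u w, e u w -> ~~ connect e w u) -> uniq (x :: r).
Proof.
move=> + Hac; elim: r x => [|z r IH] x // /andP[exz pz].
rewrite cons_uniq.
rewrite (IH z pz) andbT.
apply/negP => xin.
have := path_connect pz xin.
by move: (Hac _ _ exz) => /negbTE ->.
Qed.

Lemma sum_ind1 (V : finType) (R : numDomainType) (a0 : V) :
  \sum_(a : V) ((a == a0)%:R : R) = 1.
Proof.
rewrite (bigD1 a0) //= eqxx big1 ?addr0 // => a /negbTE -> //.
Qed.

Lemma Gsum (V : finType) (R : numDomainType) (w : V) (l : seq (V * V)) :
  \sum_(a : V) (((w, a) \in l)%:R : R) <= (count (fun q => q.1 == w) l)%:R.
Proof.
elim: l => [|q l IH]; first by rewrite big1.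
apply: (@le_trans _ _ (\sum_(a : V) ((((w, a) == q)%:R : R) + ((w, a) \in l)%:R))).
  apply: ler_sum => a _; rewrite in_cons.
  by case: ((w,a) == q); case: ((w,a) \in l); rewrite /= ?addr0 ?add0r ?lerDl.
rewrite big_split /= natrD lerD //.
case: q => q1 q2 /=.
case: (eqVneq q1 w) => [->|ne].
  by rewrite (eq_bigr (fun a => (a == q2)%:R)) ?sum_ind1 // => a _; rewrite xpair_eqE eqxx.
rewrite big1 // => a _; rewrite xpair_eqE eq_sym (negbTE ne) //.
Qed.

Section Flow.
Variables (V : finType) (R : realFieldType) (L : V -> nat) (y : V -> R)
  (S T : {set V}) (F : seq (flowpath V R)).
Hypothesis Hdis : [disjoint S & T].
Hypothesis Hflow : is_yflow L y S T F.
Hypothesis Hac : facyclic F.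
Hypothesis Hy : forall u, 0 <= y u <= 1.

Definition ind (p : flowpath V R) u w : R := ((u, w) \in ppairs p)%:R.

Lemma pathP p : p \in F ->
  [/\ 0 < p.1, pfirst p \in S, plast p \in T, (L (pfirst p) <= L (plast p))%N &
      forall v, v \in pinterior p ->
        [/\ v \notin S, v \notin T, y v = 1 & (L (pfirst p) <= L v)%N]].
Proof. by case: Hflow => H _ _ _; apply: H. Qed.

Lemma path_shape p : p \in F -> exists x0 int lst,
  [/\ pfirst p = x0, pinterior p = int, plast p = lst,
      ppairs p = Z x0 int lst & uniq (x0 :: rcons int lst)].
Proof.
move=> pF; have [_ pS pT _ _] := pathP pF.
case: p pF pS pT => a [x0 [|y0 r]] pF /=; rewrite /pfirst /plast /=.
  by move=> pS pT; move: (disjointFr Hdis pS); rewrite pT.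
move=> _ _; exists x0, (belast y0 r), (last y0 r); split => //.
  by rewrite /ppairs /pverts /= -ppairsE.
rewrite -(lastI y0 r) -cons_uniq; apply: uniq_acyc; last exact: Hac.
apply: path_of_pairs => -[q1 q2] Hq /=.
by apply/hasP; exists (a, (x0, y0 :: r)).
Qed.

Lemma P1 p u w : p \in F -> (u, w) \in ppairs p -> u = pfirst p \/ u \in pinterior p.
Proof.
move=> pF; have [x0 [int [lst [-> -> _ -> _]]]] := path_shape pF.
by move/memZ1; rewrite in_cons => /orP[/eqP->|]; [left|right].
Qed.

Lemma P2 p u w : p \in F -> (u, w) \in ppairs p -> w = plast p \/ w \in pinterior p.
Proof.
move=> pF; have [x0 [int [lst [_ -> -> -> _]]]] := path_shape pF.
by move/memZ2; rewrite mem_rcons in_cons => /orP[/eqP->|]; [left|right].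
Qed.

Lemma P3 p s : p \in F -> s \in S -> \sum_(a : V) ind p s a = (pfirst p == s)%:R.
Proof.
move=> pF sS; have [_ pS _ _ Hint] := pathP pF.
have [x0 [int [lst [E1 E2 _ E4 _]]]] := path_shape pF.
rewrite /ind E4 E1.
have x0int : x0 \notin int.
  by apply/negP; rewrite -E2 => /Hint [] /negP; rewrite -E1 pS.
case: (eqVneq x0 s) => [<-|ne].
  transitivity (\sum_(a:V) ((a == head lst int)%:R : R)); last exact: sum_ind1.
  by apply: eq_bigr => a _; rewrite Zfirst.
apply: big1 => a _; case H: ((s, a) \in _) => //; move: H => /memZ1.
rewrite in_cons eq_sym (negbTE ne) /=.
by rewrite -E2 => /Hint [] /negP; rewrite sS.
Qed.

Lemma P4 p t : p \in F -> t \in T -> \sum_(u : V) ind p u t = (plast p == t)%:R.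
Proof.
move=> pF tT; have [_ _ pT _ Hint] := pathP pF.
have [x0 [int [lst [_ E2 E3 E4 _]]]] := path_shape pF.
rewrite /ind E4 E3.
have lint : lst \notin int.
  by apply/negP; rewrite -E2 => /Hint [] _ /negP; rewrite -E3 pT.
case: (eqVneq lst t) => [<-|ne].
  transitivity (\sum_(u:V) ((u == last x0 int)%:R : R)); last exact: sum_ind1.
  by apply: eq_bigr => u _; rewrite Zlast.
apply: big1 => u _; case H: ((u, t) \in _) => //; move: H => /memZ2.
rewrite mem_rcons in_cons eq_sym (negbTE ne) /=.
by rewrite -E2 => /Hint [] _ /negP; rewrite tT.
Qed.

Lemma P5 p w : p \in F -> w \notin S -> w \notin T ->
  \sum_(u : V) ind p u w <= \sum_(a : V) ind p w a.
Proof.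
move=> pF wS wT; have [_ _ pT _ Hint] := pathP pF.
have [x0 [int [lst [_ E2 E3 E4 U]]]] := path_shape pF.
rewrite /ind E4.
case: (pickP (fun u => (u, w) \in Z x0 int lst)) => [u0 Hu0|Hn]; last first.
  rewrite big1 ?sumr_ge0 // => u _; by rewrite Hn.
have -> : \sum_(u : V) (((u, w) \in Z x0 int lst)%:R : R) = 1.
  transitivity (\sum_(u:V) ((u == u0)%:R : R)); last exact: sum_ind1.
  apply: eq_bigr => u _; case H: ((u, w) \in _).
    by rewrite (Zpred_uniq U H Hu0) eqxx.
  by case: eqP H => // ->; rewrite Hu0.
have win : w \in x0 :: int.
  move: (memZ2 Hu0); rewrite mem_rcons in_cons => /orP[/eqP E|H]; last by rewrite in_cons H orbT.
  by move: wT; rewrite E -E3 pT.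
have [a0 Ha0] := Zsucc lst win.
rewrite (bigD1 a0) //= Ha0 lerDl sumr_ge0 // => a _; exact: ler0n.
Qed.

Lemma P6 p w : p \in F -> w \notin S ->
  \sum_(a : V) ind p w a <= (count_mem w (pinterior p))%:R.
Proof.
move=> pF wS; have [_ pS _ _ _] := pathP pF.
have [x0 [int [lst [E1 E2 _ E4 _]]]] := path_shape pF.
rewrite /ind E4 E2; apply: le_trans (Gsum _ w _) _.
rewrite Zcount1 /= ler_nat.
have -> : (x0 == w) = false by apply/negP => /eqP E; move: wS; rewrite -E -E1 pS.
by [].
Qed.

Lemma noself p w : p \in F -> (w, w) \notin ppairs p.
Proof.
move=> pF; apply/negP => H.
have : farc F w w by apply/hasP; exists p.
by move/Hac; rewrite connect0.
Qed.

Lemma ind_ge0 p u w : 0 <= ind p u w.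
Proof. exact: ler0n. Qed.

Lemma fflowE u w : fflow F u w = \sum_(p <- F) p.1 * ind p u w.
Proof.
rewrite /fflow big_mkcond; apply: eq_bigr => p _.
by rewrite /ind; case: ((u, w) \in _); rewrite ?mulr1 ?mulr0.
Qed.

Lemma flflowE u w : flflow L F u w = \sum_(p <- F) (L (pfirst p))%:R * p.1 * ind p u w.
Proof.
rewrite /flflow big_mkcond; apply: eq_bigr => p _.
by rewrite /ind; case: ((u, w) \in _); rewrite ?mulr1 ?mulr0.
Qed.

Lemma fflow_ge0 u w : 0 <= fflow F u w.
Proof.
rewrite fflowE big_seq; apply: sumr_ge0 => p pF.
by have [H _ _ _ _] := pathP pF; rewrite mulr_ge0 ?ind_ge0 // ltW.
Qed.

Lemma flflow_ge0 u w : 0 <= flflow L F u w.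
Proof.
rewrite flflowE big_seq; apply: sumr_ge0 => p pF.
by have [H _ _ _ _] := pathP pF; rewrite !mulr_ge0 ?ind_ge0 ?ler0n // ltW.
Qed.


Lemma y_ge0 u : 0 <= y u. Proof. by case/andP: (Hy u). Qed.

Lemma G_fl_le u w : flflow L F u w <= (L u)%:R * fflow F u w.
Proof.
rewrite flflowE fflowE mulr_sumr !big_seq; apply: ler_sum => p pF.
have [H0 _ _ _ Hint] := pathP pF.
rewrite /ind; case H: (_ \in _); last by rewrite !mulr0.
rewrite /= !mulr1n !mulr1 ler_pM2r // ler_nat.
by case: (P1 pF H) => [->//|/Hint []].
Qed.

Lemma sum_sumE (G : flowpath V R -> V -> R) :
  \sum_(a : V) \sum_(p <- F) G p a = \sum_(p <- F) \sum_(a : V) G p a.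
Proof. exact: exchange_big. Qed.

Lemma OutE u : \sum_(a : V) flflow L F u a =
  \sum_(p <- F) (L (pfirst p))%:R * p.1 * \sum_(a : V) ind p u a.
Proof.
under eq_bigr do rewrite flflowE.
by rewrite sum_sumE; apply: eq_bigr => p _; rewrite mulr_sumr.
Qed.

Lemma InE w : \sum_(u : V) flflow L F u w =
  \sum_(p <- F) (L (pfirst p))%:R * p.1 * \sum_(u : V) ind p u w.
Proof.
under eq_bigr do rewrite flflowE.
by rewrite sum_sumE; apply: eq_bigr => p _; rewrite mulr_sumr.
Qed.

Lemma Sigma_le u : u \notin S ->
  (L u)%:R * \sum_(p <- F) p.1 * (count_mem u (pinterior p))%:R <= (L u)%:R * y u.
Proof.
move=> uS; case: (boolP (has (fun p => u \in pinterior p) F)) => [/hasP [p pF uin]|hn].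
  have [_ _ _ _ Hint] := pathP pF; have [_ uT y1 _] := Hint u uin.
  rewrite y1; apply: ler_wpM2l; first exact: ler0n.
  by case: Hflow => _ _ _ H; apply: H.
rewrite big1_seq ?mulr0 ?mulr_ge0 ?ler0n ?y_ge0 // => p /andP[_ pF].
have /count_memPn -> : u \notin pinterior p.
  by apply/negP => H; move/hasP: hn; apply; exists p.
by rewrite mulr0.
Qed.

Lemma G_Out_le u : \sum_(a : V) flflow L F u a <= (L u)%:R * y u.
Proof.
rewrite OutE; case: (boolP (u \in S)) => uS.
  apply: (@le_trans _ _ ((L u)%:R * \sum_(p <- F | pfirst p == u) p.1)); last first.
    by apply: ler_wpM2l; [exact: ler0n|case: Hflow => _ H _ _; apply: H].
  rewrite mulr_sumr [X in _ <= X]big_mkcond /= !big_seq; apply: ler_sum => p pF.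
  rewrite P3 //; case: eqP => [->|_]; by rewrite ?mulr1 ?mulr0 // mulrC.
apply: le_trans (Sigma_le uS); rewrite mulr_sumr !big_seq; apply: ler_sum => p pF.
have [H0 _ _ _ Hint] := pathP pF.
apply: (@le_trans _ _ ((L (pfirst p))%:R * p.1 * (count_mem u (pinterior p))%:R)).
  by apply: ler_wpM2l; [rewrite mulr_ge0 ?ler0n ?ltW|exact: P6].
case: (boolP (u \in pinterior p)) => [uin|/count_memPn ->]; last by rewrite !mulr0.
rewrite mulrA; apply: ler_wpM2r; first exact: ler0n.
rewrite ler_pM2r // ler_nat.
by have [] := Hint u uin.
Qed.

Lemma G_In_le_Out w : w \notin S -> w \notin T ->
  \sum_(u : V) flflow L F u w <= \sum_(a : V) flflow L F w a.
Proof.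
move=> wS wT; rewrite InE OutE !big_seq; apply: ler_sum => p pF.
have [H0 _ _ _ _] := pathP pF.
by apply: ler_wpM2l; [rewrite mulr_ge0 ?ler0n ?ltW|exact: P5].
Qed.

Lemma ind_inS p u s : p \in F -> s \in S -> ind p u s = 0.
Proof.
move=> pF sS; have [_ _ pT _ Hint] := pathP pF.
rewrite /ind; case H: (_ \in _) => //.
case: (P2 pF H) => [E|/Hint [] /negP //].
by move: (disjointFr Hdis sS); rewrite E pT.
Qed.

Lemma ind_outT p t a : p \in F -> t \in T -> ind p t a = 0.
Proof.
move=> pF tT; have [_ pS _ _ Hint] := pathP pF.
rewrite /ind; case H: (_ \in _) => //.
case: (P1 pF H) => [E|/Hint [] _ /negP //].
by move: (disjointFr Hdis pS); rewrite -E tT.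
Qed.

Lemma fl_inS u s : s \in S -> flflow L F u s = 0.
Proof.
move=> sS; rewrite flflowE big1_seq // => p /andP[_ pF].
by rewrite ind_inS // mulr0.
Qed.

Lemma f_inS u s : s \in S -> fflow F u s = 0.
Proof.
move=> sS; rewrite fflowE big1_seq // => p /andP[_ pF].
by rewrite ind_inS // mulr0.
Qed.

Lemma fl_outT t a : t \in T -> flflow L F t a = 0.
Proof.
move=> tT; rewrite flflowE big1_seq // => p /andP[_ pF].
by rewrite ind_outT // mulr0.
Qed.

Lemma ind_off p u w : p \in F -> ~~ farc F u w -> ind p u w = 0.
Proof.
move=> pF /hasPn H; rewrite /ind; case E: (_ \in _) => //.
by move: (H p pF); rewrite E.
Qed.

Lemma fl_off u w : ~~ farc F u w -> flflow L F u w = 0.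
Proof.
move=> nf; rewrite flflowE big1_seq // => p /andP[_ pF].
by rewrite ind_off // mulr0.
Qed.

Lemma f_off u w : ~~ farc F u w -> fflow F u w = 0.
Proof.
move=> nf; rewrite fflowE big1_seq // => p /andP[_ pF].
by rewrite ind_off // mulr0.
Qed.

Lemma G_flS s a : s \in S -> flflow L F s a = (L s)%:R * fflow F s a.
Proof.
move=> sS; rewrite flflowE fflowE mulr_sumr !big_seq; apply: eq_bigr => p pF.
have [_ _ _ _ Hint] := pathP pF.
rewrite /ind; case H: (_ \in _); last by rewrite !mulr0.
case: (P1 pF H) => [<-|/Hint [] /negP //]; by rewrite mulrA.
Qed.

Lemma G_flT u t : t \in T -> flflow L F u t <= (L t)%:R * fflow F u t.
Proof.
move=> tT; rewrite flflowE fflowE mulr_sumr !big_seq; apply: ler_sum => p pF.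
have [H0 _ _ Hle Hint] := pathP pF.
rewrite /ind; case H: (_ \in _); last by rewrite !mulr0.
rewrite /= !mulr1n !mulr1 ler_pM2r // ler_nat.
by case: (P2 pF H) => [E|/Hint [] _ /negP //]; rewrite E.
Qed.

Lemma G_of s : s \in S -> \sum_(a : V) fflow F s a = \sum_(p <- F | pfirst p == s) p.1.
Proof.
move=> sS; under eq_bigr do rewrite fflowE.
rewrite sum_sumE [RHS]big_mkcond /= !big_seq; apply: eq_bigr => p pF.
by rewrite -mulr_sumr P3 //; case: eqP; rewrite ?mulr1 ?mulr0.
Qed.

Lemma G_if t : t \in T -> \sum_(u : V) fflow F u t = \sum_(p <- F | plast p == t) p.1.
Proof.
move=> tT; under eq_bigr do rewrite fflowE.
rewrite sum_sumE [RHS]big_mkcond /= !big_seq; apply: eq_bigr => p pF.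
by rewrite -mulr_sumr P4 //; case: eqP; rewrite ?mulr1 ?mulr0.
Qed.

Lemma G_totS : \sum_(s in S) \sum_(p <- F | pfirst p == s) p.1 = \sum_(p <- F) p.1.
Proof.
under eq_bigr do rewrite big_mkcond /=.
rewrite exchange_big /= !big_seq; apply: eq_bigr => p pF.
have [_ pS _ _ _] := pathP pF.
rewrite (bigD1 (pfirst p)) //= eqxx big1 ?addr0 // => s /andP[_ ne].
by rewrite eq_sym (negbTE ne).
Qed.

Lemma G_totT : \sum_(t in T) \sum_(p <- F | plast p == t) p.1 = \sum_(p <- F) p.1.
Proof.
under eq_bigr do rewrite big_mkcond /=.
rewrite exchange_big /= !big_seq; apply: eq_bigr => p pF.
have [_ _ pT _ _] := pathP pF.
rewrite (bigD1 (plast p)) //= eqxx big1 ?addr0 // => s /andP[_ ne].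
by rewrite eq_sym (negbTE ne).
Qed.

Lemma G_y1 u w : farc F u w -> w \notin T -> y w = 1.
Proof.
move=> /hasP [p pF H] wT; have [_ _ pT _ Hint] := pathP pF.
case: (P2 pF H) => [E|/Hint [] //].
by move: wT; rewrite E pT.
Qed.

Lemma G_noloop w : ~~ farc F w w.
Proof. by apply/negP => /Hac; rewrite connect0. Qed.

Lemma farc_notT u w : farc F u w -> u \notin T.
Proof.
move=> /hasP [p pF H]; have [_ pS _ _ Hint] := pathP pF.
case: (P1 pF H) => [->|/Hint [] //]; by rewrite (disjointFr Hdis pS).
Qed.

Lemma farc_notS u w : farc F u w -> w \notin S.
Proof.
move=> /hasP [p pF H]; have [_ _ pT _ Hint] := pathP pF.
case: (P2 pF H) => [->|/Hint [] //]; by rewrite (disjointFl Hdis pT).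
Qed.

End Flow.

Section Arith.
Variable R : realFieldType.
Implicit Types X O M a b : R.

Lemma div_le1 a M : 0 <= a <= M -> a / M <= 1.
Proof.
case/andP=> a0 aM; case: (eqVneq M 0) => [->|nz]; first by rewrite invr0 mulr0 ler01.
have Mp : 0 < M by rewrite lt_def nz (le_trans a0 aM).
by rewrite ler_pdivrMr // mul1r.
Qed.

Lemma div_ge0' a M : 0 <= a -> 0 <= M -> 0 <= a / M.
Proof. by move=> ? ?; apply: divr_ge0. Qed.

Lemma arith1 X O M : 0 <= X <= M -> 0 <= O <= M -> X - X * O / M <= M - O.
Proof.
move=> /andP[X0 XM] /andP[O0 OM].
case: (eqVneq M 0) => [M0|nz].
  have -> : X = 0 by apply/eqP; rewrite eq_le X0 andbT -M0.
  have -> : O = 0 by apply/eqP; rewrite eq_le O0 andbT -M0.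
  by rewrite M0 !mul0r subr0.
have Mp : 0 < M by rewrite lt_def nz (le_trans X0 XM).
rewrite -subr_ge0.
have -> : M - O - (X - X * O / M) = (M - X) * (M - O) / M by field.
by apply: divr_ge0; [apply: mulr_ge0; rewrite subr_ge0|exact: ltW].
Qed.

Lemma arith2 X O M : 0 <= X -> 0 <= O <= M -> 0 <= X - X * O / M.
Proof.
move=> X0 OM; rewrite subr_ge0 -mulrA.
by rewrite -[X in _ <= X]mulr1 ler_wpM2l // div_le1.
Qed.

Lemma arith3 X M a : 0 <= X <= M -> 0 <= a -> X * a / M <= a.
Proof.
move=> XM a0; rewrite mulrAC -[X in _ <= X]mul1r; apply: ler_wpM2r => //.
exact: div_le1.
Qed.

Lemma cancelL (l O y : R) : l != 0 -> (l * O) / (l * y) = O / y.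
Proof. by move=> nz; rewrite invfM mulrACA divff // mul1r. Qed.

End Arith.

Section Main.
Variables (V : finType) (e : rel V) (R : realFieldType)
  (L : V -> nat) (k delta : nat) (x : V -> V -> R) (y : V -> R)
  (S T : {set V}) (F : seq (flowpath V R)).
Hypothesis esym : symmetric e.
Hypothesis Hdis : [disjoint S & T].
Hypothesis Hfeas : feasible e L k (Some delta) x y.
Hypothesis Hflow : is_yflow L y S T F.
Hypothesis Hac : facyclic F.

Let fl := flflow L F.
Let f := fflow F.
Let M u := (L u)%:R * y u.
Let Out u := \sum_(a : V) fl u a.

Lemma Hy : forall u, 0 <= y u <= 1.
Proof. by case: Hfeas => _ _ _ _ []. Qed.
Lemma Hx0 u v : 0 <= x u v.
Proof. by case: Hfeas => _ _ _ _ [] _ _ ->. Qed.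
Lemma Hxy u v : x u v <= y u.
Proof. by case: Hfeas => _ H _ _ _; apply: H. Qed.
Lemma HX u : \sum_(v : V) x u v <= M u.
Proof. by case: Hfeas => _ _ H _ _; apply: H. Qed.
Lemma Hcol v : \sum_(u : V) x u v = 1.
Proof. by case: Hfeas => _ _ _ H _; apply: H. Qed.
Lemma Hdist u v : ext_gt (dist e u v) (Some delta) -> x u v = 0.
Proof. by case: Hfeas => _ _ _ _ [] _ H _; apply: H. Qed.

Lemma yge0 u : 0 <= y u. Proof. by case/andP: (Hy u). Qed.
Lemma Mge0 u : 0 <= M u. Proof. by rewrite /M mulr_ge0 ?ler0n ?yge0. Qed.
Lemma flge0 u w : 0 <= fl u w. Proof. exact: (flflow_ge0 Hflow). Qed.
Lemma fge0 u w : 0 <= f u w. Proof. exact: (fflow_ge0 Hflow). Qed.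
Lemma Outle u : Out u <= M u. Proof. exact: (G_Out_le Hdis Hflow Hac Hy). Qed.
Lemma Outge0 u : 0 <= Out u. Proof. by apply: sumr_ge0 => a _; apply: flge0. Qed.
Lemma flleOut u w : fl u w <= Out u.
Proof.
rewrite /Out (bigD1 w) //= lerDl; apply: sumr_ge0 => a _; exact: flge0.
Qed.
Lemma Xge0 u : 0 <= \sum_(v : V) x u v. Proof. by apply: sumr_ge0 => v _; apply: Hx0. Qed.
Lemma xleX u v : x u v <= \sum_(v' : V) x u v'.
Proof. rewrite (bigD1 v) //= lerDl; apply: sumr_ge0 => a _; exact: Hx0. Qed.

Lemma cs_xE w v : cs_x L x y F w v =
  x w v + \sum_(u : V) x u v * fl u w / M u - x w v * Out w / M w.
Proof.
rewrite /cs_x; congr (_ + _ - _).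
  rewrite big_mkcond; apply: eq_bigr => u _; case: ifP => // /negbT nf.
  by rewrite /fl fl_off // mulr0 mul0r.
rewrite big_mkcond /Out /M mulr_sumr mulr_suml; apply: eq_bigr => a _; case: ifP => // /negbT nf.
by rewrite /fl fl_off // mulr0 mul0r.
Qed.


Let OF t := \sum_(u : V) f t u.
Let IF t := \sum_(u : V) f u t.

Lemma OF_le s : s \in S -> 0 <= OF s <= y s.
Proof.
move=> sS; rewrite sumr_ge0 /=; last by move=> a _; apply: fge0.
rewrite /OF /f (G_of Hdis Hflow Hac sS).
by case: Hflow => _ H _ _; apply: H.
Qed.

Lemma IF_le t : t \in T -> 0 <= IF t <= 1 - y t.
Proof.
move=> tT; rewrite sumr_ge0 /=; last by move=> a _; apply: fge0.
rewrite /IF /f (G_if Hdis Hflow Hac tT).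
by case: Hflow => _ _ H _; apply: H.
Qed.

Lemma cs_yE t : cs_y y S T F t =
  if t \in S then y t - OF t else if t \in T then y t + IF t else y t.
Proof.
rewrite /cs_y /OF /IF /f; case: ifP => _.
  congr (_ - _); rewrite big_mkcond; apply: eq_bigr => u _; case: ifP => // /negbT nf.
  by rewrite f_off.
case: ifP => _ //; congr (_ + _); rewrite big_mkcond; apply: eq_bigr => u _; case: ifP => // /negbT nf.
by rewrite f_off.
Qed.

Lemma part1 : \sum_(u : V) cs_y y S T F u = k%:R.
Proof.
have E : forall t, cs_y y S T F t =
  y t - (if t \in S then OF t else 0) + (if t \in T then IF t else 0).
  move=> t; rewrite cs_yE; case: ifP => tS.
    by rewrite (disjointFr Hdis tS) addr0.
  by case: ifP => tT; rewrite subr0 ?addr0.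
under eq_bigr do rewrite E.
rewrite big_split sumrB /= -!big_mkcond /=.
have -> : \sum_(i in S) OF i = \sum_(s in S) \sum_(p <- F | pfirst p == s) p.1.
  by apply: eq_bigr => s sS; rewrite /OF /f (G_of Hdis Hflow Hac sS).
have -> : \sum_(i in T) IF i = \sum_(t in T) \sum_(p <- F | plast p == t) p.1.
  by apply: eq_bigr => t tT; rewrite /IF /f (G_if Hdis Hflow Hac tT).
rewrite (G_totS Hflow) (G_totT Hflow) subrK.
by case: Hfeas.
Qed.

Lemma part5 u : 0 <= cs_y y S T F u <= 1.
Proof.
rewrite cs_yE; case: ifP => uS.
  have /andP[O0 Oy] := OF_le uS; have /andP[y0 y1] := Hy u.
  by rewrite subr_ge0 Oy /= (le_trans _ y1) // lerBlDr lerDl.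
case: ifP => uT; last exact: Hy.
have /andP[I0 I1] := IF_le uT; have /andP[y0 y1] := Hy u.
by rewrite addr_ge0 //= -lerBrDl.
Qed.


Lemma term_ge0 u v w : 0 <= x u v * fl u w / M u.
Proof. by apply: divr_ge0; [apply: mulr_ge0; [apply: Hx0|apply: flge0]|apply: Mge0]. Qed.

Lemma part7 w v : 0 <= cs_x L x y F w v.
Proof.
rewrite cs_xE addrAC addr_ge0 //; last by apply: sumr_ge0 => u _; apply: term_ge0.
rewrite -mulrA mulrA; apply: arith2; first exact: Hx0.
by rewrite Outge0 Outle.
Qed.

Lemma part4 v : \sum_(u : V) cs_x L x y F u v = 1.
Proof.
under eq_bigr do rewrite cs_xE.
rewrite sumrB big_split /= exchange_big /=.
have -> : \sum_(j : V) \sum_(i : V) x j v * fl j i / M j = \sum_(u : V) x u v * Out u / M u.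
  by apply: eq_bigr => a _; rewrite /Out -mulr_suml -mulr_sumr.
by rewrite addrK Hcol.
Qed.

Lemma termT u v t : t \in T -> x u v * fl u t / M u <= f u t.
Proof.
move=> tT; case: (eqVneq (M u) 0) => [->|nz]; first by rewrite invr0 mulr0 fge0.
have Mp : 0 < M u by rewrite lt_def nz Mge0.
rewrite ler_pdivrMr //.
apply: (@le_trans _ _ (y u * ((L u)%:R * f u t))).
  apply: ler_pM => //; [exact: Hx0|exact: flge0|exact: Hxy|exact: (G_fl_le Hdis Hflow Hac)].
by rewrite /M le_eqVlt; apply/orP; left; apply/eqP; ring.
Qed.

Lemma Out_S s : s \in S -> Out s = (L s)%:R * OF s.
Proof.
move=> sS; rewrite /Out /OF mulr_sumr; apply: eq_bigr => a _.
exact: (G_flS Hdis Hflow Hac).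
Qed.

Lemma Out_T t : t \in T -> Out t = 0.
Proof.
move=> tT; rewrite /Out big1 // => a _; exact: (fl_outT Hdis Hflow Hac).
Qed.

Lemma sum_in_S s (G : V -> R) : s \in S -> \sum_(u : V) G u * fl u s / M u = 0.
Proof.
move=> sS; rewrite big1 // => u _.
by rewrite /fl (fl_inS Hdis Hflow Hac u sS) mulr0 mul0r.
Qed.

Lemma x_L0 w v : L w = 0%N -> x w v = 0.
Proof.
move=> L0; apply/eqP; rewrite eq_le Hx0 andbT.
by apply: (le_trans (xleX w v)); apply: (le_trans (HX w)); rewrite /M L0 mul0r.
Qed.

Lemma part2 w v : cs_x L x y F w v <= cs_y y S T F w.
Proof.
rewrite cs_xE cs_yE; case: ifP => wS.
  rewrite sum_in_S // addr0 Out_S //.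
  case: (eqVneq (L w) 0%N) => [L0|Lnz].
    by rewrite x_L0 // !mul0r subr0 subr_ge0; case/andP: (OF_le wS).
  rewrite /M -mulrA cancelL ?pnatr_eq0 // mulrA.
  apply: arith1; last exact: OF_le.
  by rewrite Hx0 Hxy.
case: ifP => wT.
  rewrite Out_T // mulr0 mul0r subr0 /IF; apply: lerD; first exact: Hxy.
  by apply: ler_sum => u _; apply: termT.
apply: (@le_trans _ _ (x w v + \sum_(u : V) x u v * fl u w / M u)).
  rewrite lerBlDr lerDl -mulrA mulrA; apply: divr_ge0; last exact: Mge0.
  by apply: mulr_ge0; [exact: Hx0|exact: Outge0].
case: (boolP [exists u, farc F u w]) => [/existsP [u0 fu0]|/existsPn na].
  rewrite (G_y1 Hdis Hflow Hac fu0 (negbT wT)) -(Hcol v) [X in _ <= X](bigD1 w) //=.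
  rewrite (bigD1 w) //= /fl fl_off ?(G_noloop Hac) // mulr0 mul0r add0r lerD2l.
  apply: ler_sum => u _; rewrite -mulrA; apply: ler_piMr; first exact: Hx0.
  apply: div_le1; rewrite flge0 /=; exact: (le_trans (flleOut _ _) (Outle _)).
rewrite big1 ?addr0; first exact: Hxy.
by move=> u _; rewrite /fl fl_off ?na // mulr0 mul0r.
Qed.


Let X u := \sum_(v : V) x u v.

Lemma sumx'E w : \sum_(v : V) cs_x L x y F w v =
  X w + \sum_(u : V) X u * fl u w / M u - X w * Out w / M w.
Proof.
under eq_bigr do rewrite cs_xE.
rewrite sumrB big_split /= exchange_big /=.
congr (_ + _ - _).
  by apply: eq_bigr => u _; rewrite /X -!mulr_suml.
by rewrite /X -!mulr_suml.
Qed.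

Lemma part3 w : \sum_(v : V) cs_x L x y F w v <= (L w)%:R * cs_y y S T F w.
Proof.
have X0 : 0 <= X w by apply: Xge0.
rewrite sumx'E cs_yE; case: ifP => wS.
  rewrite sum_in_S // addr0 Out_S // mulrBr.
  have /andP[O0 Oy] := OF_le wS.
  apply: arith1; first by rewrite X0 HX.
  by rewrite mulr_ge0 ?ler0n //= ler_wpM2l ?ler0n.
case: ifP => wT.
  rewrite Out_T // mulr0 mul0r subr0 mulrDr /IF mulr_sumr; apply: lerD; first exact: HX.
  apply: ler_sum => u _; apply: le_trans (G_flT Hdis Hflow Hac u wT).
  by apply: arith3; [rewrite Xge0 HX|exact: flge0].
apply: (@le_trans _ _ (X w - X w * Out w / M w + Out w)); last first.
  rewrite -lerBrDr; apply: arith1; first by rewrite X0 HX.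
  by rewrite Outge0 Outle.
rewrite addrAC lerD2l; apply: le_trans (G_In_le_Out Hdis Hflow Hac (negbT wS) (negbT wT)).
apply: ler_sum => u _; apply: arith3; [by rewrite Xge0 HX|exact: flge0].
Qed.


Lemma part6 w v : ext_gt (dist e w v) (eadd delta (dmax e F)) -> cs_x L x y F w v = 0.
Proof.
rewrite /dmax; case: ifP => [/forallP Hall|//].
set D := (\max_(uw | _) _)%N => /= Hgt.
have xw : x w v = 0.
  apply: Hdist; move: Hgt; rewrite /ext_gt; case: (dist e w v) => // n; lia.
have xu : forall u, farc F u w -> x u v = 0.
  move=> u fu; have /forallP/(_ w)/implyP/(_ fu) := Hall u.
  case Euw: (dist e u w) => [a|] // _.
  have aD : (a <= D)%N.
    have := @leq_bigmax_cond _ (fun uw : V * V => farc F uw.1 uw.2)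
      (fun uw : V * V => odflt 0%N (dist e uw.1 uw.2)) (u, w) fu.
    by rewrite /= Euw.
  apply: Hdist; rewrite /ext_gt; case Euv: (dist e u v) => [b|] //.
  rewrite ltnNge; apply/negP => bd.
  have Ewu : dist e w u = Some a by rewrite dist_sym.
  have [c [Ec cle]] := dist_tri Ewu Euv.
  by move: Hgt; rewrite Ec /=; lia.
rewrite /cs_x xw add0r [X in _ - X]big1 ?subr0 => [|a _]; last by rewrite !mul0r.
by apply: big1 => u /xu ->; rewrite !mul0r.
Qed.

Lemma part_rad0 v : (forall a, ~~ farc F a v) ->
  (radius e (cs_x L x y F) v <= radius e x v)%N.
Proof.
move=> na; apply/bigmax_leqP => w /andP [pos nd].
apply: (@leq_bigmax_cond _ (fun w' => (0 < x v w') && (dist e w' v != None))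
  (fun w' => odflt 0%N (dist e w' v)) w).
rewrite nd andbT lt_def Hx0 andbT; apply/negP => /eqP x0.
move: pos; rewrite cs_xE x0 [X in _ + X - _]big1; first by rewrite !mul0r add0r subr0 ltxx.
by move=> u _; rewrite /fl fl_off // mulr0 mul0r.
Qed.

Lemma part_rad1 v : (exists a, farc F a v) ->
  ole (radius e (cs_x L x y F) v) (rbound e x F v).
Proof.
move=> _; rewrite /rbound; case: ifP => [/forallP Hall|//] /=.
apply/bigmax_leqP => w /andP [pos nd].
case E: (dist e w v) => [n|]; last by rewrite E in nd.
rewrite /=.
case: (boolP (0 < x v w)) => xp.
  apply: leq_trans (leq_maxl _ _).
  have := @leq_bigmax_cond _ (fun w' => (0 < x v w') && (dist e w' v != None))
    (fun w' => odflt 0%N (dist e w' v)) w.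
  by rewrite E xp /=; apply.
have x0 : x v w = 0 by apply/eqP; rewrite eq_le Hx0 andbT leNgt xp.
case: (boolP [exists u, farc F u v && (0 < x u w)]) => [/existsP [u /andP [fu xu]]|/existsPn nu]; last first.
  move: pos; rewrite cs_xE x0 [X in _ + X - _]big1; first by rewrite !mul0r add0r subr0 ltxx.
  move=> u _; case: (boolP (farc F u v)) => fu; last by rewrite /fl fl_off // mulr0 mul0r.
  have : x u w = 0 by apply/eqP; rewrite eq_le Hx0 andbT leNgt; move: (nu u); rewrite fu.
  by move=> ->; rewrite !mul0r.
case Euw: (dist e u w) => [b|]; last first.
  by move: xu; rewrite (@Hdist u w) ?ltxx // /ext_gt Euw.
have /implyP/(_ fu) := Hall u; case Euv: (dist e u v) => [a|] // _.
have Ewu : dist e w u = Some b by rewrite dist_sym.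
have [c [Ec cle]] := dist_tri Ewu Euv.
move: E; rewrite Ec => -[<-].
apply: leq_trans (leq_maxr _ _).
apply: (leq_trans cle).
have Hb : (b <= radius e x u)%N.
  have := @leq_bigmax_cond _ (fun w' => (0 < x u w') && (dist e w' u != None))
    (fun w' => odflt 0%N (dist e w' u)) w.
  by rewrite Ewu xu /=; apply.
have := @leq_bigmax_cond _ (fun a => farc F a v)
  (fun a => radius e x a + odflt 0%N (dist e a v))%N u fu.
rewrite Euv /=; apply: leq_trans.
by rewrite leq_add2r.
Qed.


Lemma main_all :
  let x' := cs_x L x y F in
  let y' := cs_y y S T F in
  [/\ feasible e L k (eadd delta (dmax e F)) x' y',
      forall v, (forall a, ~~ farc F a v) -> (radius e x' v <= radius e x v)%N,
      forall v, (exists a, farc F a v) -> ole (radius e x' v) (rbound e x F v) &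
      forall v, v \notin S -> v \notin T -> y' v = y v].
Proof.
move=> x' y'; split.
- split.
  + exact: part1.
  + move=> u v; exact: part2.
  + move=> u; exact: part3.
  + move=> v; exact: part4.
  + split.
    * move=> u; exact: part5.
    * move=> u v; exact: part6.
    * move=> u v; exact: part7.
- exact: part_rad0.
- exact: part_rad1.
- by move=> v vS vT; rewrite /y' cs_yE (negbTE vS) (negbTE vT).
Qed.

End Main.

Theorem mainTheorem12 (V : finType) (e : rel V) (R : realFieldType)
  (L : V -> nat) (k delta : nat) (x : V -> V -> R) (y : V -> R)
  (S T : {set V}) (F : seq (flowpath V R)) :
  symmetric e -> irreflexive e -> (0 < k)%N -> [disjoint S & T] ->
  feasible e L k (Some delta) x y ->
  is_yflow L y S T F -> facyclic F ->
  let x' := cs_x L x y F in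
  let y' := cs_y y S T F in
  [/\ feasible e L k (eadd delta (dmax e F)) x' y',
      forall v, (forall a, ~~ farc F a v) -> (radius e x' v <= radius e x v)%N,
      forall v, (exists a, farc F a v) -> ole (radius e x' v) (rbound e x F v) &
      forall v, v \notin S -> v \notin T -> y' v = y v].
Proof.
move=> esym _ _ Hdis Hfeas Hflow Hac.
exact: (main_all esym Hdis Hfeas Hflow Hac).
Qed.
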